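(* Suppose $c\ge a\ge d_1>0$ and $c\ge b>d_2>0$ are real numbers. Then the equation $$d_1^{-\beta}+d_2^{-\beta}-a^{-\beta}-b^{-\beta}-c^{-\beta}+1=0$$ has at most one solution $\beta>0$. *)

(* Defs.v *)
From Stdlib Require Import Reals.
Open Scope R_scope.

Definition Feq (a b c d1 d2 beta : R) : R :=
  Rpower d1 (- beta) + Rpower d2 (- beta) - Rpower a (- beta)
  - Rpower b (- beta) - Rpower c (- beta) + 1.

(* Main.v *)
Require Import Defs.
From Stdlib Require Import Reals Lra.
Open Scope R_scope.

Lemma ln_le' x y : 0 < x -> x <= y -> ln x <= ln y.
Proof. intros Hx [H|H]. left; now apply ln_increasing. subst; lra. Qed.

Lemma dexp A t : derivable_pt_lim (fun t => exp (A*t)) t (A * exp (A*t)).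
Proof.
  apply derivable_pt_lim_ext with (f := comp exp (mult_real_fct A id)).
  { intro z; reflexivity. }
  replace (A * exp (A*t)) with (exp (A*t) * (A * 1)) by ring.
  apply derivable_pt_lim_comp.
  - apply derivable_pt_lim_scal, derivable_pt_lim_id.
  - apply derivable_pt_lim_exp.
Qed.

Definition Hf A1 A2 B1 B2 C t :=
  exp (A1*t) - exp (A2*t) + exp (B1*t) - exp (B2*t) - 1 + exp (C*t).
Definition Hd A1 A2 B1 B2 C t :=
  A1*exp (A1*t) - A2*exp (A2*t) + B1*exp (B1*t) - B2*exp (B2*t) + C*exp (C*t).
Definition Hdd A1 A2 B1 B2 C t :=
  A1*(A1*exp (A1*t)) - A2*(A2*exp (A2*t)) + B1*(B1*exp (B1*t)) - B2*(B2*exp (B2*t)) + C*(C*exp (C*t)).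

Lemma dHf A1 A2 B1 B2 C t :
  derivable_pt_lim (Hf A1 A2 B1 B2 C) t (Hd A1 A2 B1 B2 C t).
Proof.
  unfold Hf, Hd.
  apply derivable_pt_lim_ext with
    (f := ((((((fun t => exp (A1*t)) - (fun t => exp (A2*t))) + (fun t => exp (B1*t)))
            - (fun t => exp (B2*t))) - fct_cte 1) + (fun t => exp (C*t)))%F).
  { intro z; reflexivity. }
  replace (A1*exp (A1*t) - A2*exp (A2*t) + B1*exp (B1*t) - B2*exp (B2*t) + C*exp (C*t))
    with (A1*exp (A1*t) - A2*exp (A2*t) + B1*exp (B1*t) - B2*exp (B2*t) - 0 + C*exp (C*t)) by ring.
  apply derivable_pt_lim_plus; [|apply dexp].
  apply derivable_pt_lim_minus; [|apply derivable_pt_lim_const].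
  apply derivable_pt_lim_minus; [|apply dexp].
  apply derivable_pt_lim_plus; [|apply dexp].
  apply derivable_pt_lim_minus; apply dexp.
Qed.

Lemma dHd A1 A2 B1 B2 C t :
  derivable_pt_lim (Hd A1 A2 B1 B2 C) t (Hdd A1 A2 B1 B2 C t).
Proof.
  unfold Hd, Hdd.
  apply derivable_pt_lim_ext with
    (f := (((((mult_real_fct A1 (fun t => exp (A1*t))) - mult_real_fct A2 (fun t => exp (A2*t))) + mult_real_fct B1 (fun t => exp (B1*t)))
            - mult_real_fct B2 (fun t => exp (B2*t))) + mult_real_fct C (fun t => exp (C*t)))%F).
  { intro z; reflexivity. }
  apply derivable_pt_lim_plus; [|apply derivable_pt_lim_scal, dexp].
  apply derivable_pt_lim_minus; [|apply derivable_pt_lim_scal, dexp].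
  apply derivable_pt_lim_plus; [|apply derivable_pt_lim_scal, dexp].
  apply derivable_pt_lim_minus; apply derivable_pt_lim_scal, dexp.
Qed.

Lemma Hdd_pos A1 A2 B1 B2 C t : 0 <= t -> A2 <= A1 -> 0 <= A2 -> B2 < B1 -> 0 <= B2 ->
  0 < Hdd A1 A2 B1 B2 C t.
Proof.
  intros Ht HA HA2 HB HB2. unfold Hdd.
  assert (E1 : exp (A2*t) <= exp (A1*t)).
  { destruct (Rle_lt_or_eq_dec _ _ HA) as [h|h]. 2: subst; lra.
    destruct (Rle_lt_or_eq_dec _ _ Ht) as [h'|h']. 2: subst; rewrite !Rmult_0_r; lra.
    left; apply exp_increasing; nra. }
  assert (E2 : exp (B2*t) <= exp (B1*t)).
  { destruct (Rle_lt_or_eq_dec _ _ Ht) as [h'|h']. 2: subst; rewrite !Rmult_0_r; lra.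
    left; apply exp_increasing; nra. }
  pose proof (exp_pos (A2*t)). pose proof (exp_pos (B2*t)). pose proof (exp_pos (C*t)).
  assert (0 <= C*(C*exp (C*t))) by (rewrite <- Rmult_assoc; apply Rmult_le_pos; nra).
  assert (A2*(A2*exp (A2*t)) <= A1*(A1*exp (A1*t))).
  { rewrite <- !Rmult_assoc. apply Rmult_le_compat; nra. }
  assert (B2*(B2*exp (B2*t)) < B1*(B1*exp (B1*t))).
  { rewrite <- !Rmult_assoc. 
    apply Rle_lt_trans with (B2*B2*exp (B1*t)). apply Rmult_le_compat_l; nra.
    apply Rmult_lt_compat_r; nra. }
  lra.
Qed.

Theorem lemma1 (a b c d1 d2 : R)
  (hca : a <= c) (had : d1 <= a) (hd1 : 0 < d1)
  (hcb : b <= c) (hbd : d2 < b) (hd2 : 0 < d2) :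
  forall beta1 beta2 : R,
    0 < beta1 -> 0 < beta2 ->
    Feq a b c d1 d2 beta1 = 0 -> Feq a b c d1 d2 beta2 = 0 ->
    beta1 = beta2.
Proof.
  assert (ha : 0 < a) by lra. assert (hb : 0 < b) by lra. assert (hc : 0 < c) by lra.
  set (C := ln c). set (A1 := C - ln d1). set (A2 := C - ln a).
  set (B1 := C - ln d2). set (B2 := C - ln b).
  assert (HA : A2 <= A1) by (unfold A1, A2; pose proof (ln_le' _ _ hd1 had); lra).
  assert (HA2 : 0 <= A2) by (unfold A2, C; pose proof (ln_le' _ _ ha hca); lra).
  assert (HB : B2 < B1) by (unfold B1, B2; pose proof (ln_increasing _ _ hd2 hbd); lra).
  assert (HB2 : 0 <= B2) by (unfold B2, C; pose proof (ln_le' _ _ hb hcb); lra).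
  assert (Heq : forall t, Hf A1 A2 B1 B2 C t = exp (C*t) * Feq a b c d1 d2 t).
  { intro t. unfold Hf, Feq, Rpower, A1, A2, B1, B2, C.
    repeat rewrite ?Rmult_plus_distr_l, ?Rmult_minus_distr_l. rewrite <- !exp_plus.
    replace (ln c * t + - t * ln c) with 0 by ring. rewrite exp_0.
    repeat match goal with |- context [exp ?x] =>
      match x with
      | ln c * t + - t * ln ?y => replace x with ((ln c - ln y) * t) by ring
      end end.
    ring. }
  assert (Z : forall t, Feq a b c d1 d2 t = 0 -> Hf A1 A2 B1 B2 C t = 0).
  { intros t h; rewrite Heq, h; ring. }
  assert (H0 : Hf A1 A2 B1 B2 C 0 = 0).
  { unfold Hf; rewrite !Rmult_0_r, exp_0; ring. }
  assert (Mono : forall x y, 0 <= x -> x < y -> Hd A1 A2 B1 B2 C x < Hd A1 A2 B1 B2 C y).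
  { intros x y Hx Hxy.
    destruct (MVT_cor2 (Hd A1 A2 B1 B2 C) (Hdd A1 A2 B1 B2 C) x y Hxy) as [e [He Hin]].
    { intros; apply dHd. }
    assert (0 < Hdd A1 A2 B1 B2 C e) by (apply Hdd_pos; lra).
    assert (0 < Hdd A1 A2 B1 B2 C e * (y - x)) by (apply Rmult_lt_0_compat; lra).
    lra. }
  assert (Key : forall x y, 0 < x -> x < y -> Hf A1 A2 B1 B2 C x = 0 -> Hf A1 A2 B1 B2 C y = 0 -> False).
  { intros x y Hx Hxy Fx Fy.
    destruct (MVT_cor2 (Hf A1 A2 B1 B2 C) (Hd A1 A2 B1 B2 C) 0 x Hx) as [e1 [He1 H1]].
    { intros; apply dHf. }
    destruct (MVT_cor2 (Hf A1 A2 B1 B2 C) (Hd A1 A2 B1 B2 C) x y Hxy) as [e2 [He2 H2]].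
    { intros; apply dHf. }
    assert (Hd A1 A2 B1 B2 C e1 = 0).
    { rewrite Fx, H0 in He1. assert (P : Hd A1 A2 B1 B2 C e1 * (x - 0) = 0) by lra. apply Rmult_integral in P. destruct P; lra. }
    assert (Hd A1 A2 B1 B2 C e2 = 0).
    { rewrite Fx, Fy in He2. assert (P : Hd A1 A2 B1 B2 C e2 * (y - x) = 0) by lra. apply Rmult_integral in P. destruct P; lra. }
    pose proof (Mono e1 e2 ltac:(lra) ltac:(lra)). lra. }
  intros b1 b2 h1 h2 F1 F2.
  destruct (Rtotal_order b1 b2) as [l|[e|l]]; auto.
  - exfalso; exact (Key b1 b2 h1 l (Z _ F1) (Z _ F2)).
  - exfalso; exact (Key b2 b1 h2 l (Z _ F2) (Z _ F1)).
Qed.
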